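(* Let $n\in\mathbb{N}$ and let $\mathcal{F}_1,\dots,\mathcal{F}_{n+1}$ be non-empty collections of closed intervals in $\mathbb{R}$ such that every colorful $(n+1)$-tuple is $n$-pierceable. Then there exist $i\in[n+1]$ and, for every $k\in[n+1]$ with $k\neq i$, an interval $F_k\in\mathcal{F}_k$ such that $\mathcal{F}_i\cup\{F_k: k\in[n+1],\,k\neq i\}$ is $n$-pierceable.
   Context: A family $\mathcal{F}$ of subsets of $\mathbb{R}$ is $n$-pierceable if there is $A\subseteq\mathbb{R}$ with $|A|\le n$ meeting every member of $\mathcal{F}$. A colorful $(n+1)$-tuple from $\mathcal{F}_1,\dots,\mathcal{F}_{n+1}$ is a tuple $(C_1,\dots,C_{n+1})$ with $C_j\in\mathcal{F}_{i_j}$ for pairwise distinct indices $i_1,\dots,i_{n+1}$ (i.e., one member from each family). *)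

(* Defs.v *)
From Stdlib Require Import Reals List.
Open Scope R_scope.

Definition rset := R -> Prop.

Definition closed_interval (S : rset) : Prop :=
  exists a b : R, a <= b /\ forall x, S x <-> a <= x <= b.

Definition rfamily := rset -> Prop.

Definition pierceable (n : nat) (F : rfamily) : Prop :=
  exists A : list R, (length A <= n)%nat /\
    forall J, F J -> exists x, In x A /\ J x.

Definition family_of_tuple (m : nat) (C : nat -> rset) : rfamily :=
  fun J => exists i, (i < m)%nat /\ J = C i.

(* Main.v *)
Require Import Defs.
From Stdlib Require Import Reals List Lra Lia Classical ClassicalEpsilon.
Open Scope R_scope.

Lemma choice_fun {A : Type} (a0 : A) (P : nat -> Prop) (Q : nat -> A -> Prop) :
  (forall k, P k -> exists J, Q k J) -> exists C : nat -> A, forall k, P k -> Q k (C k).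
Proof.
  intros H.
  assert (H' : forall k, exists J, P k -> Q k J).
  { intro k. destruct (classic (P k)) as [Hp|Hp].
    - destruct (H k Hp) as [J HJ]. exists J; auto.
    - exists a0. intro; contradiction. }
  exists (fun k => proj1_sig (constructive_indefinite_description _ (H' k))).
  intros k Pk. exact (proj2_sig (constructive_indefinite_description _ (H' k)) Pk).
Qed.

Lemma ci_right J : closed_interval J -> exists b, J b /\ forall x, J x -> x <= b.
Proof.
  intros [a [b [Hab HJ]]]. exists b. split.
  - apply HJ; lra.
  - intros x Hx. apply HJ in Hx; lra.
Qed.

Lemma ci_left J : closed_interval J -> exists a, J a /\ forall x, J x -> a <= x.
Proof.
  intros [a [b [Hab HJ]]]. exists a. split.
  - apply HJ; lra.
  - intros x Hx. apply HJ in Hx; lra.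
Qed.

Lemma ci_conv J a b x : closed_interval J -> J a -> J b -> a <= x <= b -> J x.
Proof.
  intros [a' [b' [Hab HJ]]] Ha Hb Hx. apply HJ in Ha. apply HJ in Hb. apply HJ. lra.
Qed.

Lemma list_min_gt (L : list nat) (p : R) (P : nat -> R -> Prop) :
  (forall l q q', q' <= q -> P l q -> P l q') ->
  (forall l, In l L -> exists q, p < q /\ P l q) ->
  exists q, p < q /\ forall l, In l L -> P l q.
Proof.
  intros Hd; induction L as [|a L IH]; intros H.
  - exists (p+1). split; [lra| intros l []].
  - destruct (H a (or_introl eq_refl)) as [qa [Hqa Pa]].
    destruct IH as [q [Hq Pq]]. { intros l Hl. apply H. right; exact Hl. }
    exists (Rmin qa q). split. { apply Rmin_glb_lt; lra. }
    intros l [<-|Hl].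
    + apply (Hd _ qa); [apply Rmin_l|exact Pa].
    + apply (Hd _ q); [apply Rmin_r|auto].
Qed.

Lemma list_min (L : list nat) (P : nat -> R -> Prop) :
  (forall l q q', q' <= q -> P l q -> P l q') ->
  (forall l, In l L -> exists q, P l q) ->
  exists q, forall l, In l L -> P l q.
Proof.
  intros Hd; induction L as [|a L IH]; intros H.
  - exists 0. intros l [].
  - destruct (H a (or_introl eq_refl)) as [qa Pa].
    destruct IH as [q Pq]. { intros l Hl. apply H. right; exact Hl. }
    exists (Rmin qa q).
    intros l [<-|Hl].
    + apply (Hd _ qa); [apply Rmin_l|exact Pa].
    + apply (Hd _ q); [apply Rmin_r|auto].
Qed.

Lemma pierce_mono m (F G : rfamily) :
  (forall J, G J -> F J) -> pierceable m F -> pierceable m G.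
Proof.
  intros H [A [HA HP]]. exists A. split; auto.
Qed.

Definition colorful_ok (m : nat) (L : list nat) (Fam : nat -> rfamily) :=
  forall C : nat -> rset, (forall i, In i L -> Fam i (C i)) ->
    pierceable m (fun J => exists i, In i L /\ J = C i).

Definition concl (m : nat) (L : list nat) (Fam : nat -> rfamily) :=
  exists i, In i L /\ exists F : nat -> rset,
    (forall k, In k L -> k <> i -> Fam k (F k)) /\
    pierceable m (fun T => Fam i T \/ exists k, In k L /\ k <> i /\ T = F k).

Definition HIs (L : list nat) (Fam : nat -> rfamily) :=
  forall i J, In i L -> Fam i J -> closed_interval J.
Definition HNs (L : list nat) (Fam : nat -> rfamily) :=
  forall i, In i L -> exists J, Fam i J.

Definition H1 (L : list nat) (Fam : nat -> rfamily) j (Red : rset -> Prop) :=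
  forall C : nat -> rset, (forall l, In l L -> l <> j -> Fam l (C l) /\ Red (C l)) ->
  exists I, Fam j I /\ forall l, In l L -> l <> j -> forall x, I x -> ~ C l x.
Definition H2 (L : list nat) (Fam : nat -> rfamily) j (Red : rset -> Prop) :=
  forall k, In k L -> k <> j -> exists Fj x, Fam j Fj /\ Fj x /\
     forall J, Fam k J -> ~ Red J -> J x.

Lemma step m
  (IH : forall L Fam, NoDup L -> length L = S m -> HIs L Fam -> HNs L Fam ->
          colorful_ok m L Fam -> concl m L Fam)
  L Fam j Red : NoDup L -> length L = S (S m) -> HIs L Fam -> HNs L Fam ->
  colorful_ok (S m) L Fam -> In j L -> H1 L Fam j Red -> H2 L Fam j Red ->
  concl (S m) L Fam.
Proof.
  intros HND Hlen HI HN HC Hj HH1 HH2.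
  destruct (in_split j L) as [l1 [l2 HL]]; [exact Hj|]. subst L.
  set (L' := l1 ++ l2).
  assert (HND' : NoDup L') by (eapply NoDup_remove_1; eauto).
  assert (HjL' : ~ In j L') by (eapply NoDup_remove_2; eauto).
  assert (Hlen' : length L' = S m).
  { unfold L'. rewrite length_app in *. simpl in Hlen. lia. }
  assert (Hin1 : forall k, In k (l1 ++ j :: l2) -> k = j \/ In k L').
  { intros k Hk. apply in_app_or in Hk. destruct Hk as [Hk|[Hk|Hk]].
    - right. apply in_or_app; auto.
    - left; auto.
    - right. apply in_or_app; auto. }
  assert (Hin2 : forall k, In k L' -> In k (l1 ++ j :: l2)).
  { intros k Hk. apply in_app_or in Hk. apply in_or_app. destruct Hk; simpl; auto. }
  assert (HjL : In j (l1 ++ j :: l2)) by (apply in_or_app; simpl; auto).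
  clearbody L'.
  set (L := l1 ++ j :: l2) in *. clearbody L.
  assert (Hne : forall k, In k L' -> k <> j) by (intros k Hk E; subst; auto).
  destruct (classic (exists k, In k L' /\ ~ exists J, Fam k J /\ Red J)) as
      [[k [Hk HE]]|HnE].
  - destruct (HH2 k (Hin2 k Hk) (Hne k Hk)) as [Fj [x [HFj [Hx HJx]]]].
    destruct (choice_fun (fun _ => True) (fun l => In l L) (fun l J => Fam l J) HN)
      as [G HG].
    destruct (choice_fun 0 (fun l => In l L) (fun l y => G l y)) as [pt Hpt].
    { intros l Hl. destruct (ci_left (G l)) as [a [Ha _]]; [eapply HI; eauto|].
      exists a; auto. }
    exists k. split; [auto|].
    exists (fun l => if Nat.eq_dec l j then Fj else G l). split.
    + intros l Hl _. destruct (Nat.eq_dec l j); [subst; auto|auto].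
    + exists (map (fun l => if Nat.eq_dec l k then x else pt l) L'). split.
      { rewrite length_map. lia. }
      intros T [HT|[l [Hl [Hlk ->]]]].
      * exists x. split.
        -- apply in_map_iff. exists k. split; auto. destruct (Nat.eq_dec k k); [|congruence]. auto.
        -- apply HJx; auto. intro HR. apply HE. exists T; auto.
      * destruct (Nat.eq_dec l j) as [->|Hlj].
        -- exists x. split; auto.
           apply in_map_iff. exists k. split; auto. destruct (Nat.eq_dec k k); [|congruence]. auto.
        -- destruct (Hin1 l Hl) as [->|HlL']; [congruence|].
           exists (pt l). split.
           ++ apply in_map_iff. exists l. split; auto. destruct (Nat.eq_dec l k); [congruence|auto].
           ++ apply Hpt; auto.
  - assert (HN' : forall k, In k L' -> exists J, Fam k J /\ Red J).
    { intros k Hk. apply NNPP. intro H. apply HnE. exists k; auto. }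
    destruct (IH L' (fun k J => Fam k J /\ Red J) HND' Hlen') as
        [i [Hi [F' [HF' [A' [HA' HPA']]]]]].
    + intros i0 J Hi0 [HJ _]. apply (HI i0 J); auto.
    + exact HN'.
    + intros C HCk.
      destruct (HH1 C) as [I [HI' Hdis]].
      { intros l Hl Hlj. destruct (Hin1 l Hl) as [->|HlL']; [congruence|auto]. }
      destruct (HC (fun l => if Nat.eq_dec l j then I else C l)) as [A [HA HPA]].
      { intros l Hl. destruct (Nat.eq_dec l j) as [->|Hlj]; auto.
        destruct (Hin1 l Hl) as [->|HlL']; [congruence|]. apply HCk; auto. }
      destruct (HPA I) as [x [HxA HxI]].
      { exists j. split; auto. destruct (Nat.eq_dec j j); congruence. }
      exists (remove Req_dec_T x A). split.
      { pose proof (remove_length_lt Req_dec_T A x HxA). lia. }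
      intros J [l [Hl ->]].
      destruct (HPA (C l)) as [y [HyA Hy]].
      { exists l. split; auto. destruct (Nat.eq_dec l j); [exfalso; eapply Hne; eauto|auto]. }
      exists y. split; auto. apply in_in_remove; auto.
      intros ->. exact (Hdis l (Hin2 l Hl) (Hne l Hl) x HxI Hy).
    + destruct (HH2 i (Hin2 i Hi) (Hne i Hi)) as [Fj [x [HFj [Hx HJx]]]].
      exists i. split; [auto|].
      exists (fun l => if Nat.eq_dec l j then Fj else F' l). split.
      * intros l Hl Hli. destruct (Nat.eq_dec l j); [subst; auto|].
        destruct (Hin1 l Hl) as [->|HlL']; [congruence|]. apply HF'; auto.
      * exists (x :: A'). split; [simpl; lia|].
        intros T [HT|[l [Hl [Hli ->]]]].
        -- destruct (classic (Red T)) as [HR|HR].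
           ++ destruct (HPA' T) as [y [Hy1 Hy2]]; [left; auto|].
              exists y; split; simpl; auto.
           ++ exists x; split; [simpl; auto| apply HJx; auto].
        -- destruct (Nat.eq_dec l j). { exists x; split; simpl; auto. }
           destruct (Hin1 l Hl) as [->|HlL']; [congruence|].
           destruct (HPA' (F' l)) as [y [Hy1 Hy2]].
           { right. exists l; auto. }
           exists y; split; simpl; auto.
Qed.

Lemma H1_of (L : list nat) (Fam : nat -> rfamily) j (Red : rset -> Prop) p :
  HIs L Fam ->
  (forall k J, In k L -> Fam k J -> Red J -> exists a, p < a /\ forall x, J x -> a <= x) ->
  (forall q, p < q -> exists I, Fam j I /\ forall x, I x -> x < q) ->
  H1 L Fam j Red.
Proof.
  intros HI HR HG C HC.
  destruct (list_min_gt L p (fun l q => l <> j -> forall x, C l x -> q <= x)) as [q [Hq Pq]].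
  - intros l q q' Hqq' Hp Hl x Hx. specialize (Hp Hl x Hx). lra.
  - intros l Hl. destruct (Nat.eq_dec l j) as [->|Hlj].
    + exists (p+1). split; [lra|]. intro; congruence.
    + destruct (HC l Hl Hlj) as [HF HRl].
      destruct (HR l (C l) Hl HF HRl) as [a [Ha Hax]].
      exists a. split; auto.
  - destruct (HG q Hq) as [I [HIj HIq]]. exists I. split; auto.
    intros l Hl Hlj x HIx HCx. specialize (HIq x HIx). specialize (Pq l Hl Hlj x HCx). lra.
Qed.

Ltac cit HI := match goal with
  | H : ?F ?k ?J |- closed_interval ?J => apply (HI k J); [assumption|exact H]
  end.

Lemma choose L Fam : L <> nil -> HIs L Fam -> HNs L Fam ->
  exists j Red, In j L /\ H1 L Fam j Red /\ H2 L Fam j Red.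
Proof.
  intros HLn HI HN.
  set (E := fun z => forall k J, In k L -> Fam k J -> exists y, z <= y /\ J y).
  destruct (classic (exists z, E z)) as [HE|HE].
  - destruct L as [|j0 L0]; [congruence|].
    destruct (HN j0 (or_introl eq_refl)) as [J0 HJ0].
    destruct (ci_right J0) as [b0 [Hb0 Hb0']]; [apply (HI j0 J0); [left|]; auto|].
    destruct (completeness E) as [p [Hub Hlub]].
    { exists b0. intros z Hz. destruct (Hz j0 J0 (or_introl eq_refl) HJ0) as [y [Hzy Hy]].
      specialize (Hb0' y Hy). lra. }
    { exact HE. }
    set (L := j0 :: L0) in *. clearbody L.
    assert (LB : forall k J, In k L -> Fam k J -> exists y, p <= y /\ J y).
    { intros k J Hk HJ. destruct (ci_right J) as [b [Hb Hb']]; [cit HI|].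
      exists b. split; auto. apply Hlub. intros z Hz.
      destruct (Hz k J Hk HJ) as [y [Hzy Hy]]. specialize (Hb' y Hy). lra. }
    set (Good := fun j => forall q, p < q -> exists I, Fam j I /\ forall x, I x -> x < q).
    assert (HGood : exists j, In j L /\ Good j).
    { apply NNPP. intro Hn.
      destruct (list_min_gt L p (fun j q => forall I, Fam j I -> exists y, q <= y /\ I y))
        as [q [Hq Pq]].
      - intros l q q' Hqq' Hp I HIl. destruct (Hp I HIl) as [y [Hy1 Hy2]].
        exists y. split; auto. lra.
      - intros l Hl. apply NNPP. intro Hn2. apply Hn. exists l. split; auto.
        intros q Hq. apply NNPP. intro Hn3. apply Hn2. exists q. split; auto.
        intros I HIl. apply NNPP. intro Hn4. apply Hn3. exists I. split; auto.
        intros x Hx. apply Rnot_le_lt. intro Hqx. apply Hn4. exists x; auto.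
      - assert (E q) by (intros k J Hk HJ; exact (Pq k Hk J HJ)).
        specialize (Hub q H). lra. }
    assert (HRed : forall k J, In k L -> Fam k J -> ~ J p ->
                   exists a, p < a /\ forall x, J x -> a <= x).
    { intros k J Hk HJ HnJ. destruct (ci_left J) as [a [Ha Ha']]; [cit HI|].
      exists a. split; auto. apply Rnot_le_lt. intro Hap.
      destruct (LB k J Hk HJ) as [y [Hy1 Hy2]]. apply HnJ.
      apply (ci_conv J a y); [cit HI|auto|auto|]. split; auto. }
    destruct (classic (exists j, In j L /\ Good j /\ exists I, Fam j I /\ I p))
      as [[j [Hj [HGj [I [HIj HIp]]]]]|HB].
    + exists j, (fun J => ~ J p). split; [auto|split].
      * apply (H1_of L Fam j _ p HI HRed HGj).
      * intros k Hk Hkj. exists I, p. split; [auto|split; auto].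
        intros J HJ HnR. apply NNPP; auto.
    + destruct HGood as [j [Hj HGj]].
      exists j, (fun J => ~ J p). split; [auto|split].
      * apply (H1_of L Fam j _ p HI HRed HGj).
      * intros k Hk Hkj.
        destruct (classic (exists J, Fam k J /\ J p)) as [[J1 [HJ1 HJ1p]]|Hno].
        -- assert (HnG : ~ Good k) by (intro HGk; apply HB; exists k; eauto).
           assert (Hq : exists q, p < q /\ forall I, Fam k I -> exists y, q <= y /\ I y).
           { apply NNPP. intro Hn. apply HnG. intros q Hq. apply NNPP. intro Hn3.
             apply Hn. exists q. split; auto.
             intros I HIl. apply NNPP. intro Hn4. apply Hn3. exists I. split; auto.
             intros x Hx. apply Rnot_le_lt. intro Hqx. apply Hn4. exists x; auto. }
           destruct Hq as [q [Hq Hqk]].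
           destruct (HGj q Hq) as [Fj [HFj HFjq]].
           destruct (ci_right Fj) as [b [Hb Hb']]; [cit HI|].
           exists Fj, b. split; [auto|split; auto].
           assert (Hpb : p < b).
           { destruct (LB j Fj Hj HFj) as [y [Hy1 Hy2]]. specialize (Hb' y Hy2).
             destruct (Req_dec_T p b) as [<-|Hne]; [|lra].
             exfalso. apply HB. exists j. split; auto. split; auto. exists Fj; auto. }
           intros J HJ HnR. assert (HJp : J p) by (apply NNPP; auto).
           destruct (Hqk J HJ) as [y [Hy1 Hy2]]. specialize (HFjq b Hb).
           apply (ci_conv J p y); [cit HI|auto|auto|]. lra.
        -- destruct (HN j Hj) as [Fj HFj].
           destruct (ci_right Fj) as [b [Hb _]]; [cit HI|].
           exists Fj, b. split; [auto|split; auto].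
           intros J HJ HnR. exfalso. apply Hno. exists J. split; auto. apply NNPP; auto.
  - assert (HU : exists j, In j L /\ forall q, exists I, Fam j I /\ forall x, I x -> x < q).
    { apply NNPP. intro Hn.
      destruct (list_min L (fun j q => forall I, Fam j I -> exists y, q <= y /\ I y))
        as [q Pq].
      - intros l q q' Hqq' Hp I HIl. destruct (Hp I HIl) as [y [Hy1 Hy2]].
        exists y. split; auto. lra.
      - intros l Hl. apply NNPP. intro Hn2. apply Hn. exists l. split; auto.
        intros q. apply NNPP. intro Hn3. apply Hn2. exists q.
        intros I HIl. apply NNPP. intro Hn4. apply Hn3. exists I. split; auto.
        intros x Hx. apply Rnot_le_lt. intro Hqx. apply Hn4. exists x; auto.
      - apply HE. exists q. intros k J Hk HJ; exact (Pq k Hk J HJ). }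
    destruct HU as [j [Hj HUj]].
    exists j, (fun _ => True). split; [auto|split].
    + intros C HC.
      destruct (list_min L (fun l q => l <> j -> forall x, C l x -> q <= x)) as [q Pq].
      * intros l q q' Hqq' Hp Hl x Hx. specialize (Hp Hl x Hx). lra.
      * intros l Hl. destruct (Nat.eq_dec l j) as [->|Hlj].
        -- exists 0. intro; congruence.
        -- destruct (HC l Hl Hlj) as [HF _].
           destruct (ci_left (C l)) as [a [_ Ha]]; [cit HI|].
           exists a. intros _. auto.
      * destruct (HUj q) as [I [HIj HIq]]. exists I. split; auto.
        intros l Hl Hlj x HIx HCx. specialize (HIq x HIx). specialize (Pq l Hl Hlj x HCx). lra.
    + intros k Hk Hkj. destruct (HN j Hj) as [Fj HFj].
      destruct (ci_right Fj) as [b [Hb _]]; [cit HI|].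
      exists Fj, b. split; [auto|split; auto]. intros J _ HnR. exfalso; auto.
Qed.

Lemma main m : forall L Fam, NoDup L -> length L = S m -> HIs L Fam -> HNs L Fam ->
  colorful_ok m L Fam -> concl m L Fam.
Proof.
  induction m as [|m IH]; intros L Fam HND Hlen HI HN HC.
  - destruct (choice_fun (fun _ => True) (fun l => In l L) (fun l J => Fam l J) HN)
      as [G HG].
    destruct (HC G HG) as [A [HA HPA]].
    destruct L as [|j0 L0]; [discriminate|].
    destruct (HPA (G j0)) as [x [Hx _]]. { exists j0; split; [left|]; auto. }
    destruct A; [destruct Hx|simpl in HA; lia].
  - destruct (choose L Fam) as [j [Red [Hj [HH1 HH2]]]]; auto.
    { intro; subst; discriminate. }
    eapply step; eauto.
Qed.

Theorem theorem7 (n : nat) (Fam : nat -> rfamily)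
  (Hint : forall (i : nat) (J : rset), (i < n + 1)%nat -> Fam i J -> closed_interval J)
  (Hne : forall i : nat, (i < n + 1)%nat -> exists J : rset, Fam i J)
  (Hcol : forall C : nat -> rset,
      (forall i : nat, (i < n + 1)%nat -> Fam i (C i)) ->
      pierceable n (family_of_tuple (n + 1)%nat C)) :
  exists i : nat, (i < n + 1)%nat /\
    exists F : nat -> rset,
      (forall k : nat, (k < n + 1)%nat -> k <> i -> Fam k (F k)) /\
      pierceable n (fun T => Fam i T \/
                     exists k : nat, (k < n + 1)%nat /\ k <> i /\ T = F k).
Proof.
  assert (Hs : forall k, In k (seq 0 (n+1)) <-> (k < n + 1)%nat).
  { intro k. rewrite in_seq. lia. }
  destruct (main n (seq 0 (n+1)) Fam) as [i [Hi [F [HF HP]]]].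
  - apply seq_NoDup.
  - rewrite length_seq. lia.
  - intros i J Hi HJ. apply (Hint i J); auto. apply Hs; auto.
  - intros i Hi. apply Hne. apply Hs; auto.
  - intros C HC. eapply pierce_mono; [|apply Hcol].
    + intros J [i [Hi ->]]. exists i. split; auto. apply Hs; auto.
    + intros i Hi. apply HC. apply Hs; auto.
  - exists i. split; [apply Hs; auto|]. exists F. split.
    + intros k Hk. apply HF. apply Hs; auto.
    + eapply pierce_mono; [|exact HP].
      intros T [HT|[k [Hk [Hki ->]]]]; [left; auto|right].
      exists k. split; auto. apply Hs; auto.
Qed.
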